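(* Let $\mathrm{GNN}$ be a node-most-expressive GNN and $\mathrm{AGG}$ an injective function on finite multisets of node representations, and fix a labeling trick. For any node sets $S,S'$ of graphs ${\mathcal A},{\mathcal A}'$ and any integer $h\ge 0$, let ${\mathcal A}^{(S)}_{(S,h)}$ denote the labeled graph obtained by applying the labeling trick to $(S,{\mathcal A}_{(S,h)})$, and set $\mathrm{GNN}(S,{\mathcal A}^{(S)}_{(S,h)}):=\mathrm{AGG}(\{\mathrm{GNN}(i,{\mathcal A}^{(S)}_{(S,h)})\mid i\in S\})$. Then $$\mathrm{GNN}(S,{\mathcal A}^{(S)}_{(S,h)})=\mathrm{GNN}(S',{\mathcal A}'^{(S')}_{(S',h)})\iff (S,{\mathcal A}_{(S,h)})\simeq(S',{\mathcal A}'_{(S',h)}).$$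
   Context: Graphs are encoded by tensors ${\mathcal A}\in\mathbb R^{m\times m\times k}$ (diagonal: node features; off-diagonal: edge features; first slice: adjacency matrix). The $h$-hop enclosing subgraph ${\mathcal A}_{(S,h)}$ is the subgraph (with features) induced by the nodes $\bigcup_{j\in S}\{i: d(i,j)\le h\}$, $d$ the shortest-path distance, with nodes reindexed $1,\dots,m$. A permutation $\pi$ acts by $\pi(S)=\{\pi(i):i\in S\}$ and $\pi({\mathcal A})_{\pi(i),\pi(j),:}={\mathcal A}_{i,j,:}$; $(S,{\mathcal A})\simeq(S',{\mathcal A}')$ iff the two graphs have the same number of nodes and some $\pi$ has $S=\pi(S')$, ${\mathcal A}=\pi({\mathcal A}')$. A GNN is node-most-expressive if $\mathrm{GNN}(i,{\mathcal A})=\mathrm{GNN}(j,{\mathcal A}')\iff(\{i\},{\mathcal A})\simeq(\{j\},{\mathcal A}')$ for all graphs (of any size and feature dimension). A labeling trick assigns to each $(S,{\mathcal A})$ (graph with $m$ nodes) a labeling tensor ${\mathcal L}^{(S)}\in\mathbb R^{m\times m\times d}$ that is stacked onto ${\mathcal A}$ in the third dimension to form ${\mathcal A}^{(S)}$, satisfying for all $S,{\mathcal A},S',{\mathcal A}',\pi$: (1) ${\mathcal L}^{(S)}=\pi({\mathcal L}^{(S')})\Rightarrow S=\pi(S')$; (2) $S=\pi(S')$ and ${\mathcal A}=\pi({\mathcal A}')\Rightarrow{\mathcal L}^{(S)}=\pi({\mathcal L}^{(S')})$. *)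

(* Defs.v *)
From Stdlib Require Import Reals Permutation.
From mathcomp Require Import all_boot all_order all_algebra.
From mathcomp Require Import Rstruct.
From mathcomp Require Import fingroup perm.

Set Implicit Arguments.
Unset Strict Implicit.
Unset Printing Implicit Defensive.

Local Open Scope ring_scope.

Definition tensor (m k : nat) := 'I_m -> 'I_m -> 'I_k -> R.

(* A graph with m nodes and k.+1 >= 1 feature slices; slice 0 is the
   adjacency matrix. Packed together with a node set S. *)
Record lgraph := LG { lm : nat; lk : nat; lS : {set 'I_lm}; lA : tensor lm lk.+1 }.

Definition permT (m k : nat) (pi : {perm 'I_m}) (A : tensor m k) : tensor m k :=
  fun i j c => A (pi^-1 i)%g (pi^-1 j)%g c.

(* (S, A) ~= (S', A'): same number of nodes (and same shape), and some pi
   with S = pi(S'), A = pi(A'). *)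
Definition iso (G G' : lgraph) : Prop :=
  exists pi : {perm 'I_(lm G')}, G = LG (pi @: @lS G') (permT pi (@lA G')).

Definition edge (m k : nat) (A : tensor m k.+1) (i j : 'I_m) : bool :=
  A i j ord0 != 0.

(* within A h i j  <=>  d(i,j) <= h  (shortest-path distance) *)
Fixpoint within (m k : nat) (A : tensor m k.+1) (h : nat) (i j : 'I_m) : bool :=
  if h is h'.+1 then within A h' i j || [exists l, edge A i l && within A h' l j]
  else i == j.

Definition hood (m k : nat) (h : nat) (S : {set 'I_m}) (A : tensor m k.+1) : {set 'I_m} :=
  [set i | [exists j in S, within A h i j]].

(* h-hop enclosing subgraph (S, A_(S,h)), nodes reindexed 0..#|hood|-1
   (in increasing order of the original indices). *)
Definition encl_subgraph (m k : nat) (h : nat) (S : {set 'I_m}) (A : tensor m k.+1) : lgraph :=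
  let N := hood h S A in
  @LG #|N| k [set a : 'I_#|N| | enum_val a \in S]
      (fun a b c => A (enum_val a) (enum_val b) c).

Definition stack (m k d : nat) (A : tensor m k.+1) (L : tensor m d) : tensor m (k + d).+1 :=
  fun i j c =>
    match split (cast_ord (esym (addSn k d)) c) with
    | inl c1 => A i j c1
    | inr c2 => L i j c2
    end.

Definition node_most_expressive (Out : Type)
  (gnn : forall m k, 'I_m -> tensor m k.+1 -> Out) : Prop :=
  forall m k (i : 'I_m) (A : tensor m k.+1) m' k' (j : 'I_m') (A' : tensor m' k'.+1),
    gnn m k i A = gnn m' k' j A' <-> iso (LG [set i] A) (LG [set j] A').

(* AGG is a well-defined, injective function on finite multisets
   (multisets represented as lists up to permutation). *)
Definition multiset_injective (Out Y : Type) (agg : seq Out -> Y) : Prop :=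
  forall s t, agg s = agg t <-> Permutation s t.

Definition labeling_trick (d : nat)
  (lab : forall m k, {set 'I_m} -> tensor m k.+1 -> tensor m d) : Prop :=
  (forall m k k' (S : {set 'I_m}) (A : tensor m k.+1) (S' : {set 'I_m}) (A' : tensor m k'.+1)
          (pi : {perm 'I_m}),
      lab m k S A = permT pi (lab m k' S' A') -> S = pi @: S') /\
  (forall m k (S : {set 'I_m}) (A : tensor m k.+1) (S' : {set 'I_m}) (A' : tensor m k.+1)
          (pi : {perm 'I_m}),
      S = pi @: S' -> A = permT pi A' -> lab m k S A = permT pi (lab m k S' A')).

Definition labeled (d : nat) (lab : forall m k, {set 'I_m} -> tensor m k.+1 -> tensor m d)
  (G : lgraph) : tensor (lm G) (lk G + d).+1 :=
  stack (@lA G) (lab (lm G) (lk G) (@lS G) (@lA G)).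

Definition gnn_set (Out Y : Type) (gnn : forall m k, 'I_m -> tensor m k.+1 -> Out)
  (agg : seq Out -> Y) (d : nat) (lab : forall m k, {set 'I_m} -> tensor m k.+1 -> tensor m d)
  (h : nat) (m k : nat) (S : {set 'I_m}) (A : tensor m k.+1) : Y :=
  let G := encl_subgraph h S A in
  agg [seq gnn (lm G) (lk G + d)%N i (@labeled d lab G) | i <- enum (@lS G)].

(* Main.v *)
Require Import Defs.
From Stdlib Require Import Reals Permutation.
From mathcomp Require Import all_boot all_order all_algebra.
From mathcomp Require Import Rstruct.
From mathcomp Require Import fingroup perm.
From Stdlib Require Import FunctionalExtensionality Eqdep_dec.

Set Implicit Arguments.
Unset Strict Implicit.
Unset Printing Implicit Defensive.

Lemma perm_eq_Perm (T : eqType) (s t : seq T) : perm_eq s t -> Permutation s t.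
Proof.
elim: s t => [|x s IH] t Hp.
  have := perm_size Hp; case: t Hp => //= _ _; constructor.
have xt : x \in t by rewrite -(perm_mem Hp) mem_head.
case/splitPr: xt Hp => t1 t2 Hp.
apply: Permutation_cons_app; apply: IH.
rewrite -(perm_cons x); apply: (perm_trans Hp).
by rewrite -cat1s perm_catCA.
Qed.

Lemma lg_inj m k (S1 S2 : {set 'I_m}) (A1 A2 : tensor m k.+1) :
  LG S1 A1 = LG S2 A2 -> S1 = S2 /\ A1 = A2.
Proof.
move=> H; inversion H.
have E1 := inj_pair2_eq_dec _ PeanoNat.Nat.eq_dec _ _ _ _ H1.
have E2 := inj_pair2_eq_dec _ PeanoNat.Nat.eq_dec _ _ _ _ H2.
split; first exact: E1.
have E3 := inj_pair2_eq_dec _ PeanoNat.Nat.eq_dec _ _ _ _ E2.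
exact: E3.
Qed.

Lemma mem_In (T : eqType) (x : T) s : x \in s -> List.In x s.
Proof. elim: s => //= y s IH; rewrite inE => /orP [/eqP ->|H]; [by left|by right; apply: IH]. Qed.

Lemma In_mem (T : eqType) (x : T) s : List.In x s -> x \in s.
Proof. elim: s => //= y s IH [->|H]; rewrite inE; first by rewrite eqxx. by rewrite IH // orbT. Qed.

Lemma within_refl m k (A : tensor m k.+1) h i : within A h i i.
Proof. by elim: h => [|h IH] //=; rewrite IH. Qed.

Section Main.
Variables (Out Y : Type) (gnn : forall m k, 'I_m -> tensor m k.+1 -> Out)
  (agg : seq Out -> Y) (d : nat)
  (lab : forall m k, {set 'I_m} -> tensor m k.+1 -> tensor m d).

Definition Lst (G : lgraph) :=
  [seq @gnn (lm G) (lk G + d)%N i (@labeled d lab G) | i <- enum (@lS G)].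

Lemma permT_stack m k (pi : {perm 'I_m}) (A : tensor m k.+1) (L : tensor m d) :
  stack (permT pi A) (permT pi L) = permT pi (stack A L).
Proof. by []. Qed.

Lemma main_lemma (G G' : lgraph) :
  node_most_expressive gnn -> labeling_trick lab ->
  lS G != set0 ->
  (Permutation (Lst G) (Lst G') <-> iso G G').
Proof.
move=> Hg [L1 L2] Hne; split.
- move=> Hp.
  case/set0Pn: Hne => i Hi.
  have Hin : List.In (@gnn (lm G) (lk G + d)%N i (@labeled d lab G)) (Lst G).
    by apply/List.in_map_iff; exists i; split => //; apply: mem_In; rewrite mem_enum.
  have := Permutation_in _ Hp Hin; case/List.in_map_iff => j [Ej _].
  have := (proj1 (Hg _ _ _ _ _ _ _ _) (esym Ej)) => -[pi Epi].
  case: G G' i Hi Hin Hp j Ej pi Epi => m k S A [m' k' S' A'] /= i Hi _ _ j _ pi Epi.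
  have Em : m = m' by have := f_equal lm Epi.
  subst m'.
  have Ek : k = k' by have := f_equal lk Epi => /= /addIn.
  subst k'.
  case: (lg_inj Epi) => _ Et.
  have EA : A = permT pi A'.
    apply: functional_extensionality => x; apply: functional_extensionality => y;
    apply: functional_extensionality => c.
    have := f_equal (fun T => T x y (cast_ord (addSn k d) (lshift d c))) Et.
    by rewrite /labeled /= /stack /permT /= cast_ordK (unsplitK (inl c)).
  have EL : lab S A = permT pi (lab S' A').
    apply: functional_extensionality => x; apply: functional_extensionality => y;
    apply: functional_extensionality => c.
    have := f_equal (fun T => T x y (cast_ord (addSn k d) (rshift k.+1 c))) Et.
    by rewrite /labeled /= /stack /permT /= cast_ordK (unsplitK (inr c)).
  have ES := L1 _ _ _ _ _ _ _ _ EL.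
  by exists pi; rewrite -ES -EA.
- case=> pi ->.
  case: G' pi => m k S A pi.
  rewrite /Lst /labeled /=.
  rewrite (L2 _ _ _ _ S A pi erefl erefl) permT_stack.
  set M := stack A (lab S A).
  have Hf : forall i, @gnn m (k + d)%N i (permT pi M) = @gnn m (k + d)%N (pi^-1 i)%g M.
    move=> i; apply/Hg; exists pi; congr LG.
    by rewrite imset_set1 permKV.
  rewrite (eq_map Hf).
  have Hpe : perm_eq (enum (pi @: S)) (map pi (enum S)).
    apply: uniq_perm; rewrite ?enum_uniq ?map_inj_uniq ?enum_uniq //; first exact: perm_inj.
    move=> x; rewrite mem_enum; apply/imsetP/mapP => -[y Hy ->]; exists y => //;
      by move: Hy; rewrite mem_enum.
  apply: Permutation_trans; first exact: (Permutation_map _ (perm_eq_Perm Hpe)).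
  rewrite List.map_map.
  have E : (fun x => @gnn m (k + d)%N (pi^-1%g (pi x)) M) = (fun x => @gnn m (k + d)%N x M).
    by apply: functional_extensionality => x; rewrite permK.
  rewrite E; exact: Permutation_refl.
Qed.
End Main.

Theorem corollary1 (Out Y : Type)
  (gnn : forall m k, 'I_m -> tensor m k.+1 -> Out)
  (agg : seq Out -> Y) (d : nat)
  (lab : forall m k, {set 'I_m} -> tensor m k.+1 -> tensor m d) :
  node_most_expressive gnn ->
  multiset_injective agg ->
  labeling_trick lab ->
  forall (m k : nat) (S : {set 'I_m}) (A : tensor m k.+1)
         (m' k' : nat) (S' : {set 'I_m'}) (A' : tensor m' k'.+1) (h : nat),
    S != set0 -> S' != set0 ->
    (@gnn_set Out Y gnn agg d lab h m k S A = @gnn_set Out Y gnn agg d lab h m' k' S' A'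
     <-> iso (@encl_subgraph m k h S A) (@encl_subgraph m' k' h S' A')).
Proof.
move=> Hg Ha Hl m k S A m' k' S' A' h HS HS'.
rewrite /gnn_set Ha.
apply: (@main_lemma Out gnn d lab) => //.
case/set0Pn: HS => x Hx.
have Hx' : x \in hood h S A by rewrite inE; apply/existsP; exists x; rewrite Hx within_refl.
apply/set0Pn; exists (enum_rank_in Hx' x); rewrite inE /= enum_rankK_in //.
Qed.
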